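(* Let $K$ be a lattice of finite length. (i) If $e$ is a nonzero join-prime element of $K$, $f\in K$, and $e\le f$, then the subposet $L:=K\setminus[e,f]$ of $K$ is a lattice. (ii) Let $t$ be a positive integer and let $K_1,\dots,K_t$ be upper semimodular lattices of finite length. Let $K=K_1\times\dots\times K_t$, and let $e=(e_1,\dots,e_t)\in K$ be a nonzero join-prime element. Such an $e$ has exactly one index $i\in\{1,\dots,t\}$ with $e_i\neq 0_i$, where $0_j$ is the bottom of $K_j$. Let $f=(f_1,\dots,f_t)\in K$ be such that $f_i=1_i$, the top element of $K_i$. Then the subposet $L:=K\setminus[e,f]$ of $K$ is an upper semimodular lattice, and it is a join-subsemilattice of $K$.
   Context: An element $u$ of a lattice is join-prime if $u\le x\vee y$ implies $u\le x$ or $u\le y$. $[e,f]=\{x: e\le x\le f\}$ denotes an interval. A lattice is upper semimodular if for all $x,y$, $x\wedge y\prec x$ implies $y\prec x\vee y$, where $\prec$ is the covering relation. *)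

(* Defs.v *)
From HB Require Import structures.
From mathcomp Require Import all_boot all_order.
Set Implicit Arguments. Unset Strict Implicit. Unset Printing Implicit Defensive.
Import Order.TTheory.
Local Open Scope order_scope.

Section SubPoset.
Variables (T : Type) (le : T -> T -> Prop) (S : T -> Prop).

Definition is_lub_in (x y z : T) : Prop :=
  S z /\ le x z /\ le y z /\ forall w, S w -> le x w -> le y w -> le z w.

Definition is_glb_in (x y z : T) : Prop :=
  S z /\ le z x /\ le z y /\ forall w, S w -> le w x -> le w y -> le w z.

Definition sub_lattice : Prop :=
  forall x y, S x -> S y ->
    (exists z, is_lub_in x y z) /\ (exists z, is_glb_in x y z).

Definition covers_in (x y : T) : Prop :=
  S x /\ S y /\ le x y /\ x <> y /\
  forall z, S z -> le x z -> le z y -> z = x \/ z = y.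

Definition sub_usm_lattice : Prop :=
  sub_lattice /\
  forall x y m j, S x -> S y -> is_glb_in x y m -> is_lub_in x y j ->
    covers_in m x -> covers_in y j.
End SubPoset.

Definition finite_length d (K : porderType d) : Prop :=
  exists n : nat, forall s : seq K, sorted <%O s -> (size s <= n)%N.

Definition join_prime d (K : latticeType d) (u : K) : Prop :=
  forall x y : K, u <= x `|` y -> u <= x \/ u <= y.

Definition covby d (K : porderType d) (x y : K) : Prop :=
  x < y /\ forall z : K, x < z -> z < y -> False.

Definition upper_semimodular d (K : latticeType d) : Prop :=
  forall x y : K, covby (x `&` y) x -> covby y (x `|` y).

Section Product.
Variables (t : nat) (dK : 'I_t -> Order.disp_t)
          (K : forall i : 'I_t, tbLatticeType (dK i)).

Definition prodK : Type := forall i : 'I_t, K i.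
Definition prod_le (x y : prodK) : Prop := forall i, x i <= y i.
Definition prod_join (x y : prodK) : prodK := fun i => x i `|` y i.
Definition prod_bot : prodK := fun i => \bot.
Definition prod_join_prime (u : prodK) : Prop :=
  forall x y : prodK, prod_le u (prod_join x y) -> prod_le u x \/ prod_le u y.
End Product.

(* Main.v *)
Require Import Defs.
From HB Require Import structures.
From mathcomp Require Import all_boot all_order.
From Stdlib Require Import Classical FunctionalExtensionality.
Import Order.TTheory.
Local Open Scope order_scope.

Lemma max_of d (K : tbLatticeType d) (P : K -> Prop) :
  finite_length K -> P \bot -> (forall a b, P a -> P b -> P (a `|` b)) ->
  exists g, P g /\ forall a, P a -> a <= g.
Proof.
move=> [n Hn] P0 PU.
have H : forall k, (exists g, P g /\ forall a, P a -> a <= g) \/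
   exists s : seq K, [/\ sorted <%O s, size s = k & P (last \bot s)].
  elim=> [|k [?|[s [ss sz Ps]]]]; first by right; exists [::].
  - by left.
  - have [Hm|Hm] := classic (forall a, P a -> a <= last \bot s).
    + by left; exists (last \bot s).
    + right; have [a Ha] := not_all_ex_not _ _ Hm; have [Pa na] := imply_to_and _ _ Ha.
      have lt : last \bot s < last \bot s `|` a.
        rewrite lt_neqAle leUl andbT eq_sym eq_joinl.
        by apply/negP.
      exists (rcons s (last \bot s `|` a)); split.
      * case: s ss lt {Ps sz na Hm Ha} => [|h s'] //= ss lt.
        by rewrite rcons_path ss.
      * by rewrite size_rcons sz.
      * by rewrite last_rcons; apply PU.
case: (H n.+1) => // [[s [ss sz _]]].
by have := Hn s ss; rewrite sz ltnn.
Qed.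

Lemma max_avoid d (K : tbLatticeType d) (e m : K) :
  finite_length K -> e != \bot -> join_prime e ->
  exists g, (g <= m /\ ~~ (e <= g)) /\ forall a, a <= m /\ ~~ (e <= a) -> a <= g.
Proof.
move=> fl ne jp.
apply: (@max_of _ _ (fun a => a <= m /\ ~~ (e <= a))) => //.
  by rewrite le0x lex0.
move=> a b [am ea] [bm eb]; split; first by rewrite leUx am bm.
by apply/negP => /jp [h|h]; [move: ea|move: eb]; rewrite h.
Qed.

Lemma part1 (d : Order.disp_t) (K : tbLatticeType d) (e f : K) :
      finite_length K -> e != \bot -> join_prime e -> e <= f ->
      sub_lattice (fun x y : K => x <= y) (fun x : K => ~~ (e <= x <= f)).
Proof.
move=> fl ne jp ef x y Lx Ly; split.
  exists (x `|` y); split; last first.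
    split; [exact: leUl|split; [exact: leUr|]].
    by move=> w _ xw yw; rewrite leUx xw yw.
  apply/negP => /andP [/jp [h|h] h2].
    by move: Lx; rewrite h (le_trans _ h2) ?leUl.
  by move: Ly; rewrite h (le_trans _ h2) ?leUr.
case: (boolP (e <= x `&` y <= f)) => Lm; last first.
  exists (x `&` y); split => //; split; [exact: leIl|split; [exact: leIr|]].
  by move=> w _ wx wy; rewrite lexI wx wy.
have [g [[gm eg] gmax]] := @max_avoid _ _ e (x `&` y) fl ne jp.
move/andP: Lm => [em mf].
exists g; split; first by rewrite negb_and eg.
split; first by rewrite (le_trans gm) ?leIl.
split; first by rewrite (le_trans gm) ?leIr.
move=> w Lw wx wy.
have wm : w <= x `&` y by rewrite lexI wx wy.
apply: gmax; split => //.
by move: Lw; rewrite (le_trans wm mf) andbT.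
Qed.

Section P2.
Variables (t : nat) (dK : 'I_t -> Order.disp_t)
          (K : forall i : 'I_t, tbLatticeType (dK i)).

Definition upd (w : prodK K) (i : 'I_t) (a : K i) : prodK K :=
  fun k => match i =P k with
           | ReflectT h => eq_rect i (fun k : 'I_t => (K k : Type)) a k h
           | ReflectF _ => w k end.

Lemma upd_eq w i a : upd w i a i = a.
Proof. by rewrite /upd; case: (i =P i) => // h; rewrite (eq_irrelevance h erefl). Qed.

Lemma upd_neq w i a k : i != k -> upd w i a k = w k.
Proof. by rewrite /upd; case: (i =P k) => // ->; rewrite eqxx. Qed.

Definition pm (x y : prodK K) : prodK K := fun k => x k `&` y k.

Definition Kcov (a b : prodK K) : Prop :=
  prod_le a b /\ a <> b /\ forall z, prod_le a z -> prod_le z b -> z = a \/ z = b.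

Lemma prod_usm (x y : prodK K) :
  (forall i, upper_semimodular (K i)) ->
  Kcov (pm x y) x -> Kcov y (prod_join x y).
Proof.
move=> usm [_ [ne cov]].
have [k xk] : exists k, ~~ (x k <= y k).
  apply: NNPP => H; apply: ne; apply: functional_extensionality_dep => k.
  rewrite /pm meet_l //; case: (boolP (x k <= y k)) => // h.
  by exfalso; apply: H; exists k.
have oth : forall l, l != k -> x l <= y l.
  move=> l lk; apply: contraT => xl.
  have h1 : prod_le (pm x y) (upd (pm x y) l (x l)).
    move=> m; case: (eqVneq l m) => [<-|lm]; first by rewrite upd_eq leIl.
    by rewrite upd_neq.
  have h2 : prod_le (upd (pm x y) l (x l)) x.
    move=> m; case: (eqVneq l m) => [<-|lm]; first by rewrite upd_eq.
    by rewrite upd_neq // leIl.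
  have [h|h] := cov _ h1 h2.
  - have := congr1 (fun z => z l) h; rewrite /= upd_eq /pm => /esym/eqP.
    by rewrite eq_meetl (negbTE xl).
  - have := congr1 (fun z => z k) h; rewrite /= upd_neq // /pm => /eqP.
    by rewrite eq_meetl (negbTE xk).
have cvk : covby (x k `&` y k) (x k).
  split; first by rewrite lt_neqAle leIl andbT eq_meetl.
  move=> c lc cl.
  have h1 : prod_le (pm x y) (upd (pm x y) k c).
    move=> m; case: (eqVneq k m) => [<-|km]; first by rewrite upd_eq ltW.
    by rewrite upd_neq.
  have h2 : prod_le (upd (pm x y) k c) x.
    move=> m; case: (eqVneq k m) => [<-|km]; first by rewrite upd_eq ltW.
    by rewrite upd_neq // leIl.
  have [h|h] := cov _ h1 h2.
  - have := congr1 (fun z => z k) h; rewrite /= upd_eq /pm => h'.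
    by move: lc; rewrite h' ltxx.
  - have := congr1 (fun z => z k) h; rewrite /= upd_eq => h'.
    by move: cl; rewrite h' ltxx.
have [_ cy] := usm k _ _ cvk.
split; first by move=> m; rewrite /prod_join leUr.
split.
  move=> h; have := congr1 (fun z => z k) h; rewrite /prod_join => /esym/eqP.
  by rewrite eq_joinr (negbTE xk).
move=> z yz zj.
have zl : forall l, l != k -> z l = y l.
  move=> l lk; apply: le_anti; rewrite yz andbT.
  by have := zj l; rewrite /prod_join join_r // oth.
case: (eqVneq (z k) (y k)) => e1.
  left; apply: functional_extensionality_dep => l.
  case: (eqVneq l k) => [->|lk] //; exact: zl.
case: (eqVneq (z k) (prod_join x y k)) => e2.
  right; apply: functional_extensionality_dep => l.
  case: (eqVneq l k) => [->|lk] //; rewrite (zl l lk) /prod_join join_r //.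
  exact: oth.
exfalso; apply: (cy (z k)).
  by rewrite lt_neqAle eq_sym e1 (yz k).
rewrite lt_neqAle e2 /=; have := zj k; by rewrite /prod_join => ->.
Qed.

Lemma part2 (e : prodK K) :
      (0 < t)%N ->
      (forall i, finite_length (K i)) ->
      (forall i, upper_semimodular (K i)) ->
      e <> prod_bot K -> prod_join_prime e ->
      (exists! i : 'I_t, e i != \bot) /\
      (forall (i : 'I_t) (f : prodK K), e i != \bot -> f i = \top ->
         let L := fun x : prodK K => ~ (prod_le e x /\ prod_le x f) in
         sub_usm_lattice (@prod_le _ _ K) L /\
         (forall x y, L x -> L y -> L (prod_join x y))).
Proof.
move=> t0 fl usm ne jp.
have uq : forall i j, e i != \bot -> e j != \bot -> i = j.
  move=> i j ei ej; apply: NNPP => /eqP ij.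
  have ji : j != i by rewrite eq_sym.
  have H : prod_le e (prod_join (upd e i \bot) (upd e j \bot)).
    move=> k; rewrite /prod_join; case: (eqVneq i k) => [<-|ik].
      by rewrite upd_eq (upd_neq _ _ _ _ (ji)) leUr.
    by rewrite (upd_neq _ _ _ _ ik) leUl.
  have [h|h] := jp _ _ H.
  - by move: (h i); rewrite upd_eq lex0 (negbTE ei).
  - by move: (h j); rewrite upd_eq lex0 (negbTE ej).
split.
  have [i ei] : exists i, e i != \bot.
    apply: NNPP => H; apply: ne; apply: functional_extensionality_dep => k.
    case: (eqVneq (e k) \bot) => // h; exfalso; apply: H; by exists k.
  by exists i; split => // j ej; apply: uq.
move=> i f ei fi L.
have ek : forall k, i != k -> e k = \bot.
  move=> k ik; case: (eqVneq (e k) \bot) => // h.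
  by rewrite (uq _ _ ei h) eqxx in ik.
have jpi : join_prime (e i).
  move=> a b h.
  have H : prod_le e (prod_join (upd e i a) (upd e i b)).
    move=> k; rewrite /prod_join; case: (eqVneq i k) => [<-|ik].
      by rewrite !upd_eq.
    by rewrite !(upd_neq _ _ _ _ ik) leUl.
  have [h'|h'] := jp _ _ H.
  - by left; move: (h' i); rewrite upd_eq.
  - by right; move: (h' i); rewrite upd_eq.
have notLe : forall x, L x -> prod_le x f -> ~~ (e i <= x i).
  move=> x Lx xf; apply/negP => h; apply: Lx; split => // k.
  case: (eqVneq i k) => [<-//|ik]; by rewrite ek // le0x.
have eL : forall x, ~~ (e i <= x i) -> L x.
  by move=> x h [h1 _]; move: (h1 i); rewrite (negbTE h).
have fL : forall x j, ~~ (x j <= f j) -> L x.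
  by move=> x j h [_ h1]; move: (h1 j); rewrite (negbTE h).
have LnotF : forall x, L x -> prod_le e x -> exists j, ~~ (x j <= f j).
  move=> x Lx ex; apply: NNPP => H; apply: Lx; split => // k.
  case: (boolP (x k <= f k)) => // h; exfalso; apply: H; by exists k.
have Lj : forall x y, L x -> L y -> L (prod_join x y).
  move=> x y Lx Ly [h1 h2].
  have [h|h] := jp x y h1.
  - apply: Lx; split => // k; apply: le_trans (h2 k); exact: leUl.
  - apply: Ly; split => // k; apply: le_trans (h2 k); exact: leUr.
split => //.
have Kc : forall a b, covers_in (@prod_le _ _ K) L a b -> Kcov a b.
  move=> a b [La [Lb [ab [nab cov]]]]; split => //; split => // z az zb.
  case: (classic (L z)) => Lz; first exact: cov.
  have [ez zf] : prod_le e z /\ prod_le z f by apply: NNPP.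
  have eb : prod_le e b by move=> k; apply: le_trans (ez k) (zb k).
  have af : prod_le a f by move=> k; apply: le_trans (az k) (zf k).
  have [j bj] := LnotF b Lb eb.
  have ji : j != i.
    by apply/eqP => ji; move: bj; rewrite ji fi lex1.
  have ea := notLe a La af.
  have h1 : prod_le a (upd a j (b j)).
    move=> k; case: (eqVneq j k) => [<-|jk]; first by rewrite upd_eq.
    by rewrite upd_neq.
  have h2 : prod_le (upd a j (b j)) b.
    move=> k; case: (eqVneq j k) => [<-|jk]; first by rewrite upd_eq.
    by rewrite upd_neq.
  have Lz' : L (upd a j (b j)) by apply: (fL _ j); rewrite upd_eq.
  have [h|h] := cov _ Lz' h1 h2.
  - have := congr1 (fun w => w j) h; rewrite /= upd_eq => bja.
    by move: bj; rewrite bja (le_trans (az j) (zf j)).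
  - have := congr1 (fun w => w i) h; rewrite /= upd_neq // => aib.
    by move: ea; rewrite aib (le_trans (ez i) (zb i)).
split.
  move=> x y Lx Ly; split.
    exists (prod_join x y); split; first exact: Lj.
    split; first by move=> k; exact: leUl.
    split; first by move=> k; exact: leUr.
    by move=> w _ xw yw k; rewrite /prod_join leUx xw yw.
  case: (classic (L (pm x y))) => Lm.
    exists (pm x y); split => //.
    split; first by move=> k; exact: leIl.
    split; first by move=> k; exact: leIr.
    by move=> w _ wx wy k; rewrite /pm lexI wx wy.
  have [em mf] : prod_le e (pm x y) /\ prod_le (pm x y) f by apply: NNPP.
  have [g [[gm eg] gmax]] := @max_avoid _ _ (e i) (pm x y i) (fl i) ei jpi.
  exists (upd (pm x y) i g); split; first by apply: eL; rewrite upd_eq.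
  split.
    move=> k; case: (eqVneq i k) => [<-|ik].
      by rewrite upd_eq (le_trans gm) // leIl.
    by rewrite upd_neq // leIl.
  split.
    move=> k; case: (eqVneq i k) => [<-|ik].
      by rewrite upd_eq (le_trans gm) // leIr.
    by rewrite upd_neq // leIr.
  move=> w Lw wx wy.
  have wm : prod_le w (pm x y) by move=> k; rewrite /pm lexI wx wy.
  have wf : prod_le w f by move=> k; apply: le_trans (wm k) (mf k).
  have ew := notLe w Lw wf.
  move=> k; case: (eqVneq i k) => [<-|ik].
    by rewrite upd_eq; apply: gmax; split => //; exact: wm.
  by rewrite upd_neq //; exact: wm.
move=> x y m j Lx Ly gm lj cm.
have jeq : j = prod_join x y.
  move: lj => [_ [xj [yj jmin]]].
  apply: functional_extensionality_dep => k; apply: le_anti.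
  rewrite (jmin _ (Lj _ _ Lx Ly)) /=; last 2 first.
  - by move=> l; exact: leUl.
  - by move=> l; exact: leUr.
  by rewrite /prod_join leUx xj yj.
have [mx [nmx covm]] := Kc _ _ cm.
move: gm => [Lm [mxx [my mmax]]].
case: (classic (L (pm x y))) => Lpm.
  have meq : m = pm x y.
    apply: functional_extensionality_dep => k; apply: le_anti.
    rewrite (mmax _ Lpm) /=; last 2 first.
    - by move=> l; exact: leIl.
    - by move=> l; exact: leIr.
    by rewrite /pm lexI mxx my.
  have := Kc _ _ cm; rewrite meq => /(prod_usm _ _ usm) [yj [nyj covy]].
  rewrite jeq; split => //; split; first exact: Lj.
  split => //; split => // z _; exact: covy.
exfalso.
have h1 : prod_le m (pm x y) by move=> k; rewrite /pm lexI mxx my.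
have h2 : prod_le (pm x y) x by move=> k; exact: leIl.
have [h|h] := covm _ h1 h2.
  by apply: Lpm; rewrite h.
by apply: Lpm; rewrite h.
Qed.
End P2.

Theorem proposition2p1 :
  (* (i) *)
  (forall (d : Order.disp_t) (K : tbLatticeType d) (e f : K),
      finite_length K -> e != \bot -> join_prime e -> e <= f ->
      sub_lattice (fun x y : K => x <= y) (fun x : K => ~~ (e <= x <= f)))
  /\
  (* (ii) *)
  (forall (t : nat) (dK : 'I_t -> Order.disp_t)
          (K : forall i : 'I_t, tbLatticeType (dK i)) (e : prodK K),
      (0 < t)%N ->
      (forall i, finite_length (K i)) ->
      (forall i, upper_semimodular (K i)) ->
      e <> prod_bot K -> prod_join_prime e ->
      (exists! i : 'I_t, e i != \bot) /\
      (forall (i : 'I_t) (f : prodK K), e i != \bot -> f i = \top ->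
         let L := fun x : prodK K => ~ (prod_le e x /\ prod_le x f) in
         sub_usm_lattice (@prod_le _ _ K) L /\
         (forall x y, L x -> L y -> L (prod_join x y)))).
Proof.
split; first exact: part1.
move=> t dK K e; exact: part2.
Qed.
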